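(* Let $\sigma>0$ and let $f(z)=\sum_{k=0}^\infty f_kz^k$ with $|f_k|\le(k+2)^{-1-\sigma}$ for all $k\ge0$. Let $g(z)=\exp\left(\int_0^zf(\zeta)\,d\zeta\right)=1+\sum_{k=1}^\infty g_kz^k$. Then $|g_1|\le2^{-1-\sigma}$ and $|g_k|<(k+1)^{-1-\sigma}$ for $k=2,3,\dots$. *)

(* Defs.v *)
From HB Require Import structures.
From mathcomp Require Export all_boot all_order all_algebra.
From mathcomp Require Export complex.
From mathcomp Require Export reals exp.
Set Implicit Arguments. Unset Strict Implicit. Unset Printing Implicit Defensive.
Export Order.TTheory GRing.Theory Num.Theory.
Local Open Scope ring_scope.

(* Truncation (through degree n) of the formal primitive
   F(z) = \int_0^z f = \sum_k f_k z^(k+1)/(k+1) of the power series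
   f(z) = \sum_k f_k z^k. Only the terms of degree <= n are kept. *)
Definition prim_trunc (R : rcfType) (f : nat -> R[i]) (n : nat) : {poly R[i]} :=
  \sum_(k < n) (f k / (k.+1)%:R) *: 'X^(k.+1).

(* n-th Taylor coefficient of g = exp(F) = \sum_m F^m / m!.  Since F has no
   constant term, F^m contributes to degree n only for m <= n, and only the
   terms of F of degree <= n matter, so this is exactly [z^n] exp(F). *)
Definition exp_prim_coef (R : rcfType) (f : nat -> R[i]) (n : nat) : R[i] :=
  \sum_(m < n.+1) (m`!%:R)^-1 * ((prim_trunc f n) ^+ m)`_n.

(* Main.v *)
Require Import Defs.
From mathcomp Require Import all_boot all_order all_algebra complex reals exp.
From mathcomp Require Import zify.
Import Order.TTheory GRing.Theory Num.Theory.
Local Open Scope ring_scope.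

Section S.
Variable R : rcfType.
Implicit Types f : nat -> R[i].

Lemma prim_coef f N j : (prim_trunc f N)`_j =
  if (0 < j <= N)%N then f j.-1 / j%:R else 0.
Proof.
rewrite /prim_trunc coef_sum.
under eq_bigr do rewrite coefZ coefXn.
case: j => [|j] /=.
  by rewrite big1 // => k _; rewrite mulr0.
under eq_bigr do rewrite eqSS eq_sym mulr_natr mulrb.
rewrite -big_mkcond (big_ord1_eq _ (fun k => f k / k.+1%:R)).
by [].
Qed.

Lemma coef_low (A B : {poly R[i]}) n :
  (forall i, (i <= n)%N -> A`_i = B`_i) ->
  forall m i, (i <= n)%N -> (A ^+ m)`_i = (B ^+ m)`_i.
Proof.
move=> AB; elim=> [|m IH] i le_in; first by rewrite !expr0.
rewrite !exprS !coefM; apply: eq_bigr => j _.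
have lj : (j <= n)%N by apply: leq_trans le_in; rewrite -ltnS.
rewrite AB // IH //; apply: leq_trans le_in; exact: leq_subr.
Qed.

Lemma coef_pow_vanish (A : {poly R[i]}) : A`_0 = 0 ->
  forall m i, (i < m)%N -> (A ^+ m)`_i = 0.
Proof.
move=> A0; elim=> [|m IH] i // lt_im.
rewrite exprS coefM big1 // => -[[|j] lj] _ /=; first by rewrite A0 mul0r.
by rewrite IH ?mulr0 //; lia.
Qed.

Definition EE f N M : {poly R[i]} :=
  \sum_(m < M) ((m`!)%:R)^-1 *: (prim_trunc f N) ^+ m.

Lemma P0 f N : (prim_trunc f N)`_0 = 0.
Proof. by rewrite prim_coef. Qed.

Lemma EE_coef f N M k : (k <= N)%N -> (k < M)%N -> (EE f N M)`_k = exp_prim_coef f k.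
Proof.
move=> kN kM; rewrite /EE /exp_prim_coef coef_sum.
under eq_bigr do rewrite coefZ.
have -> : \sum_(m < k.+1) ((m`!)%:R)^-1 * ((prim_trunc f k) ^+ m)`_k =
          \sum_(m < k.+1) ((m`!)%:R)^-1 * ((prim_trunc f N) ^+ m)`_k.
  apply: eq_bigr => m _; congr (_ * _); apply: (@coef_low _ _ k) => // i ik.
  rewrite !prim_coef ik (leq_trans ik kN) //.
rewrite [RHS](big_ord_widen M (fun m => ((m`!)%:R)^-1 * ((prim_trunc f N) ^+ m)`_k)) //.
rewrite [RHS]big_mkcond /=. apply: eq_bigr => m _.
case: ifP => // /negbT; rewrite -leqNgt => km.
by rewrite coef_pow_vanish ?mulr0 // P0.
Qed.

Lemma EE_deriv f N M : (EE f N M.+1)^`() = (prim_trunc f N)^`() * EE f N M.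
Proof.
rewrite /EE raddf_sum big_ord_recl /= derivZ expr0 derivC scaler0 add0r mulr_sumr.
apply: eq_bigr => m _; rewrite derivZ deriv_exp /= /bump leq0n add1n add0n -scalerMnr scalerMnl -scalerAr -mulr_natr.
congr (_ *: _); rewrite factS natrM invfM mulrAC mulVf ?mul1r //.
by rewrite pnatr_eq0.
Qed.

Lemma rec f n : exp_prim_coef f n.+1 *+ n.+1 =
  \sum_(j < n.+1) f j * exp_prim_coef f (n - j).
Proof.
have := congr1 (fun p : {poly R[i]} => p`_n) (EE_deriv f n.+1 n.+1).
rewrite /= coef_deriv EE_coef // => ->; rewrite coefM.
apply: eq_bigr => -[j lj] _ /=.
rewrite coef_deriv prim_coef /= lj.
rewrite EE_coef ?ltnS ?leq_subr //; last by apply: leq_trans (leq_subr _ _) _.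
by rewrite -mulrnAr -(mulr_natl (j.+1%:R)^-1) mulfV ?mulr1 // pnatr_eq0.
Qed.

Lemma g0 f : exp_prim_coef f 0 = 1.
Proof. by rewrite /exp_prim_coef big_ord1 expr0 coef1 fact0 invr1 mulr1. Qed.

End S.
Section A.
Variables (R : realType) (sigma : R).
Hypothesis sg : 0 < sigma.

Definition w (k : nat) : R[i] := (((k%:R : R) `^ (-1 - sigma))%:C)%C.

Lemma w_ge0 k : 0 <= w k.
Proof. by rewrite /w ler0c powR_ge0. Qed.

Lemma powR_neg (x : R) : x `^ (-1 - sigma) = (x `^ (1 + sigma))^-1.
Proof. by rewrite -powRN opprD. Qed.

Lemma w_le x y : (0 < x)%N -> (x <= y)%N -> w y <= w x.
Proof.
move=> x0 xy; rewrite /w lecR !powR_neg lef_pV2 ?posrE ?powR_gt0 ?ltr0n //; last by apply: leq_trans xy.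
apply: ge0_ler_powR; rewrite ?nnegrE ?ler0n ?ler_nat //.
by rewrite ltW // ltr_pwDr.
Qed.

Lemma w_lt x y : (0 < x)%N -> (x < y)%N -> w y < w x.
Proof.
move=> x0 xy; rewrite /w ltcR !powR_neg ltf_pV2 ?posrE ?powR_gt0 ?ltr0n //; last by apply: leq_trans (ltnW xy).
apply: gt0_ltr_powR; rewrite ?nnegrE ?ler0n ?ltr_nat //.
by rewrite ltr_pwDr.
Qed.

Lemma wM x y : w x * w y = w (x * y).
Proof. by rewrite /w -rmorphM /= natrM powRM ?ler0n. Qed.


Section M.
Variable f : nat -> R[i].
Hypothesis hf : forall k : nat, `|f k| <= w (k + 2).

Lemma step n : (forall m, (m <= n)%N -> `|exp_prim_coef f m| <= w m.+1) ->
  `|exp_prim_coef f n.+1| *+ n.+1 <= \sum_(j < n.+1) w (j.+2 * (n - j).+1).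
Proof.
move=> IH; rewrite -normrMn rec; apply: le_trans (ler_norm_sum _ _ _) _.
apply: ler_sum => j _; rewrite normrM -wM; apply: ler_pM; rewrite ?normr_ge0 //.
  by have := hf j; rewrite addn2.
by apply: IH; apply: leq_subr.
Qed.

Lemma sum_le n : \sum_(j < n.+1) w (j.+2 * (n - j).+1) <= w n.+2 *+ n.+1.
Proof.
apply: (@le_trans _ _ (\sum_(j < n.+1) w n.+2)); last by rewrite sumr_const card_ord.
apply: ler_sum => -[j lj] _ /=; apply: w_le => //; nia.
Qed.

Lemma sum_lt n : (0 < n)%N -> \sum_(j < n.+1) w (j.+2 * (n - j).+1) < w n.+2 *+ n.+1.
Proof.
move=> n0.
apply: (@lt_le_trans _ _ (\sum_(j < n.+1) w n.+2)); last by rewrite sumr_const card_ord.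
rewrite big_ord_recl [X in _ < X]big_ord_recl; apply: ltr_leD.
  by apply: w_lt => //=; rewrite subn0; nia.
apply: ler_sum => -[j lj] _ /=; apply: w_le => //; rewrite /bump /=; nia.
Qed.

Lemma bound_all m : `|exp_prim_coef f m| <= w m.+1.
Proof.
elim/ltn_ind: m => -[|n] IH.
  by rewrite g0 normr1 /w powR1.
have := le_trans (@step n (fun m lm => IH m lm)) (sum_le n).
by rewrite ler_pMn2r.
Qed.

End M.
End A.

Theorem lemma3p2 (R : realType) (sigma : R) (f : nat -> R[i]) :
  0 < sigma ->
  (forall k : nat, `|f k| <= (((k + 2)%:R : R) `^ (-1 - sigma))%:C%C) ->
  `|exp_prim_coef f 1| <= (((2%:R : R) `^ (-1 - sigma))%:C%C)
  /\ (forall k : nat, (2 <= k)%N ->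
        `|exp_prim_coef f k| < (((k + 1)%:R : R) `^ (-1 - sigma))%:C%C).
Proof.

move=> sg hf; split; first exact: (@bound_all R sigma sg f hf 1).
case=> [|[|n]] // _.
have := le_lt_trans (@step R sigma f hf n.+1 (fun m _ => @bound_all R sigma sg f hf m)) (@sum_lt R sigma sg n.+1 (ltn0Sn n)).
rewrite ltr_pMn2r // addn1 => H; exact: H.
Qed.
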